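(* Let $n\ge2$, $X=\{1,\dots,n\}$, and let $\Sigma$ be the set of collections $\tau=\{J_1,\dots,J_{n-1}\}$ of subsets of $X$ with $|J_i|=i$ for each $i$. For $\tau\in\Sigma$ let $v_\tau=(a_1,\dots,a_n)^T\in\mathbb R^n$ where $a_j$ is the number of $i$ with $j\in J_i$. Then the convex hull of $\{v_\tau:\tau\in\Sigma\}$ is the $(n-1)$-permutohedron with parameters $m_1,\dots,m_n=0,1,\dots,n-1$, i.e. the convex hull of all coordinate permutations of $(0,1,\dots,n-1)$. *)

(* Defs.v *)
From HB Require Import structures.
From mathcomp Require Import all_boot all_order all_algebra all_fingroup.
From mathcomp Require Import reals.
Set Implicit Arguments. Unset Strict Implicit. Unset Printing Implicit Defensive.
Import Order.TTheory GRing.Theory Num.Theory.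
Local Open Scope ring_scope.

Definition in_conv_hull (R : realType) (n : nat) (I : finType) (P : pred I)
  (f : I -> 'rV[R]_n) (x : 'rV[R]_n) : Prop :=
  exists w : I -> R,
    [/\ forall i, 0 <= w i, \sum_(i | P i) w i = 1
      & x = \sum_(i | P i) w i *: f i].

(* tau = (J_1, ..., J_{n-1}) encoded as J : 'I_(n-1) -> {set 'I_n},
   with index i : 'I_(n-1) standing for J_{i+1}. *)
Definition in_Sigma (n : nat) (J : {ffun 'I_(n.-1) -> {set 'I_n}}) : bool :=
  [forall i : 'I_(n.-1), #|J i| == i.+1].

Definition v_tau (R : realType) (n : nat) (J : {ffun 'I_(n.-1) -> {set 'I_n}})
  : 'rV[R]_n :=
  \row_(j < n) (#|[set i : 'I_(n.-1) | j \in J i]|)%:R.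

Definition perm_pt (R : realType) (n : nat) (s : {perm 'I_n}) : 'rV[R]_n :=
  \row_(j < n) (nat_of_ord (s j))%:R.

(* Main.v *)
Require Import Defs.
From HB Require Import structures.
From mathcomp Require Import all_boot all_order all_algebra all_fingroup.
From mathcomp Require Import reals.
From mathcomp Require Import zify ring lra.
Set Implicit Arguments. Unset Strict Implicit. Unset Printing Implicit Defensive.
Import Order.TTheory GRing.Theory Num.Theory.
Local Open Scope ring_scope.

Definition CH (R : realType) (n : nat) (x : 'rV[R]_n) :=
  in_conv_hull (fun _ : {perm 'I_n} => true) (@perm_pt R n) x.

Lemma CH_conv (R : realType) (n : nat) (I : finType) (P : pred I)
  (w : I -> R) (f : I -> 'rV[R]_n) :
  (forall i, P i -> CH (f i)) -> (forall i, 0 <= w i) ->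
  \sum_(i | P i) w i = 1 -> CH (\sum_(i | P i) w i *: f i).
Proof.
move=> hf w0 w1.
have [u hu] : exists u : I -> {perm 'I_n} -> R, forall i, P i ->
   [/\ forall s, 0 <= u i s, \sum_(s | true) u i s = 1
      & f i = \sum_(s | true) u i s *: perm_pt R s].
  have H : forall i, exists u : {perm 'I_n} -> R, P i ->
   [/\ forall s, 0 <= u s, \sum_(s | true) u s = 1
      & f i = \sum_(s | true) u s *: perm_pt R s].
    move=> i; case: (boolP (P i)) => Pi.
      by have [u [? ? ?]] := hf i Pi; exists u.
    by exists (fun _ => 0).
  by have [u hu] := fin_all_exists H; exists u.
exists (fun s => \sum_(i | P i) w i * u i s); split.
- move=> s; apply: sumr_ge0 => i Pi; have [h _ _] := hu i Pi.
  exact: mulr_ge0.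
- rewrite exchange_big /= -w1; apply: eq_bigr => i Pi.
  have [_ h _] := hu i Pi; by rewrite -mulr_sumr h mulr1.
- rewrite (eq_bigr (fun s => \sum_(i | P i) (w i * u i s) *: perm_pt R s));
    last by move=> s _; rewrite scaler_suml.
  rewrite exchange_big /=; apply: eq_bigr => i Pi.
  have [_ _ ->] := hu i Pi; rewrite scaler_sumr; apply: eq_bigr => s _.
  by rewrite scalerA.
Qed.

Lemma CH_perm (R : realType) (n : nat) (p : {perm 'I_n}) (x : 'rV[R]_n) :
  CH x -> CH (\row_j x 0 (p j)).
Proof.
case=> w [w0 w1 ->]; exists (fun t => w (p^-1 * t)%g); split => //.
  rewrite (reindex_inj (mulgI p)) /= -w1.
  by apply: eq_bigr => s _; rewrite (mulKg p).
rewrite [RHS](reindex_inj (mulgI p)) /=; apply/rowP => j; rewrite !mxE !summxE.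
apply: eq_bigr => s _; rewrite (mulKg p) !mxE permM //.
Qed.

Lemma card_ge_ord (m c : nat) : #|[set y : 'I_m | (c <= y)%N]| = (m - c)%N.
Proof.
rewrite cardsE -sum1_card big_mkcond /=.
rewrite -(big_mkord xpredT (fun y => if (c <= y)%N then 1%N else 0%N)).
elim: m => [|m IH]; first by rewrite big_geq.
rewrite big_nat_recr //= IH; case: leqP => h; lia.
Qed.

Definition acnt (n : nat) (J : {ffun 'I_(n.-1) -> {set 'I_n}}) (j : 'I_n) : nat :=
  #|[set i | j \in J i]|.

Lemma acnt_le n J j : (@acnt n J j <= n.-1)%N.
Proof. by rewrite /acnt; apply: leq_trans (max_card _) _; rewrite card_ord. Qed.

Lemma v_tauE (R : realType) n J : v_tau R J = \row_j ((@acnt n J j)%:R : R).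
Proof. by []. Qed.

Lemma acnt_inj n (hn : (2 <= n)%N) (J : {ffun 'I_(n.-1) -> {set 'I_n}}) : in_Sigma J ->
  (forall j j' k, (acnt J j <= acnt J j')%N -> j \in J k -> j' \in J k) ->
  injective (acnt J).
Proof.
move=> /forallP hs ht j j' e; case: (eqVneq j j') => // ne; exfalso.
set t := acnt J j.
set U := [set x | (t < acnt J x)%N].
have jU : j \notin U by rewrite inE ltnn.
have j'U : j' \notin U by rewrite inE -e ltnn.
have cU : (#|U| < n.-1)%N.
  have : (#|U| <= #|~: [set j; j']|)%N.
    apply: subset_leq_card; apply/subsetP => y yU; rewrite !inE.
    by apply/negP => /orP[] /eqP ey; move: yU; rewrite ey ?(negbTE jU) ?(negbTE j'U).
  rewrite (cardsCs (~: [set j; j'])) setCK cards2 ne card_ord; lia.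
have /eqP hk := hs (Ordinal cU); rewrite /= in hk.
have [x xJ xU] : exists2 x, x \in J (Ordinal cU) & x \notin U.
  apply/subsetPn; apply/negP => sub; have := subset_leq_card sub; rewrite hk; by rewrite ltnn.
have ax : (acnt J x <= t)%N by move: xU; rewrite inE -leqNgt.
have sub : j |: (j' |: U) \subset J (Ordinal cU).
  apply/subsetP => y; rewrite !inE => /orP[/eqP->|/orP[/eqP->|yU]].
  - exact: ht ax xJ.
  - by apply: ht _ xJ; rewrite -e.
  - by apply: ht _ xJ; apply: ltnW (leq_ltn_trans ax yU).
have := subset_leq_card sub; rewrite hk !cardsU1 (negbTE j'U) !inE negb_or ne. rewrite ltnn /=; lia.
Qed.

Lemma chain_perm (R : realType) n (hn : (2 <= n)%N) (J : {ffun 'I_(n.-1) -> {set 'I_n}}) :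
  in_Sigma J ->
  (forall j j' k, (acnt J j <= acnt J j')%N -> j \in J k -> j' \in J k) ->
  exists s, v_tau R J = perm_pt R s.
Proof.
move=> hs ht.
have alt : forall j, (acnt J j < n)%N by move=> j; have := acnt_le J j; lia.
have finj : injective (fun j => Ordinal (alt j)).
  by move=> j j' /(congr1 val) /= /(acnt_inj hn hs ht).
exists (perm finj); apply/rowP => j; rewrite !mxE permE //.
Qed.

Definition Jmod n (J : {ffun 'I_(n.-1) -> {set 'I_n}}) (j j' : 'I_n) (k : 'I_(n.-1)) :
  {ffun 'I_(n.-1) -> {set 'I_n}} :=
  [ffun i => if i == k then j' |: (J k :\ j) else J i].


Lemma Jmod_props n (J : {ffun 'I_(n.-1) -> {set 'I_n}}) j j' k :
  in_Sigma J -> j \in J k -> j' \notin J k ->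
  [/\ in_Sigma (Jmod J j j' k), acnt J j = (acnt (Jmod J j j' k) j).+1,
      acnt (Jmod J j j' k) j' = (acnt J j').+1 &
      forall c, c != j -> c != j' -> acnt (Jmod J j j' k) c = acnt J c].
Proof.
move=> /forallP hs jk j'k.
have ne : j != j' by apply/negP => /eqP e; move: j'k; rewrite -e jk.
split.
- apply/forallP => i; rewrite ffunE; case: (eqVneq i k) => [->|_]; last exact: hs.
  rewrite cardsU1 !inE (negbTE j'k) andbF /=.
  by have /eqP <- := hs k; rewrite (cardsD1 j (J k)) jk.
- rewrite /acnt (cardsD1 k [set i | j \in J i]) inE jk /=; congr S; apply: eq_card => i.
  rewrite !inE ffunE; case: (eqVneq i k) => [->|//].
  by rewrite !inE eqxx (negbTE ne).
- rewrite /acnt (_ : [set i | j' \in Jmod J j j' k i] = k |: [set i | j' \in J i]).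
    by rewrite cardsU1 inE j'k.
  apply/setP => i; rewrite !inE ffunE; case: (eqVneq i k) => [->|//].
  by rewrite !inE eqxx.
- move=> c cj cj'; rewrite /acnt; apply: eq_card => i; rewrite !inE ffunE.
  by case: (eqVneq i k) => [->|_]; rewrite // !inE (negbTE cj) (negbTE cj') /=.
Qed.

Lemma key_vec (R : realType) n (v v' : 'rV[R]_n) j j' (A B : nat) :
  j != j' -> (A < B)%N ->
  v 0 j = (A.+1)%:R -> v' 0 j = A%:R -> v 0 j' = B%:R -> v' 0 j' = (B.+1)%:R ->
  (forall c, c != j -> c != j' -> v 0 c = v' 0 c) ->
  v = \sum_(b : bool) (if b then (B%:R - A%:R) / (B%:R - A%:R + 1) else 1 / (B%:R - A%:R + 1)) *:
         (if b then v' else \row_c v' 0 (tperm j j' c)).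
Proof.
move=> ne AB vj v'j vj' v'j' vc; set q : R := B%:R - A%:R + 1.
have qpos : 0 < q.
  rewrite /q; have : (A%:R : R) < B%:R by rewrite ltr_nat.
  lra.
have q0 : q != 0 by rewrite gt_eqF.
rewrite big_bool /=; apply/rowP => c; rewrite !mxE.
case: (eqVneq c j) => [->|cj].
  rewrite tpermL vj v'j v'j' -!natr1 /q; field.
  by rewrite -/q.
case: (eqVneq c j') => [->|cj'].
  rewrite tpermR vj' v'j v'j' -!natr1 /q; field.
  by rewrite -/q.
rewrite tpermD 1?eq_sym // vc //; rewrite /q; field.
by rewrite -/q.
Qed.

Definition meas n (J : {ffun 'I_(n.-1) -> {set 'I_n}}) : nat :=
  \sum_(c : 'I_n) acnt J c * acnt J c.

Lemma meas_le n J : (@meas n J <= n * (n.-1 * n.-1))%N.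
Proof.
rewrite /meas; apply: (@leq_trans (\sum_(c : 'I_n) n.-1 * n.-1)).
  by apply: leq_sum => c _; apply: leq_mul; apply: acnt_le.
by rewrite sum_nat_const card_ord.
Qed.

Lemma meas_lt n (J J' : {ffun 'I_(n.-1) -> {set 'I_n}}) j j' (A B : nat) :
  j != j' -> (A < B)%N ->
  acnt J j = A.+1 -> acnt J' j = A -> acnt J j' = B -> acnt J' j' = B.+1 ->
  (forall c, c != j -> c != j' -> acnt J' c = acnt J c) ->
  (meas J < meas J')%N.
Proof.
move=> ne AB h1 h2 h3 h4 hc.
have e : forall K : {ffun 'I_(n.-1) -> {set 'I_n}}, meas K =
   (acnt K j * acnt K j + (acnt K j' * acnt K j' +
    \sum_(c | (c != j) && (c != j')) acnt K c * acnt K c))%N.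
  by move=> K; rewrite /meas (bigD1 j) //= (bigD1 j') 1?eq_sym.
rewrite !e.
have -> : (\sum_(c | (c != j) && (c != j')) acnt J' c * acnt J' c =
   \sum_(c | (c != j) && (c != j')) acnt J c * acnt J c)%N.
  by apply: eq_bigr => c /andP[cj cj']; rewrite hc.
rewrite h1 h2 h3 h4; nia.
Qed.

Lemma CH_pt (R : realType) n (s : {perm 'I_n}) : CH (perm_pt R s).
Proof.
exists (fun t => (t == s)%:R); split.
- by move=> t; rewrite ler0n.
- by rewrite (bigD1 s) //= eqxx big1 ?addr0 // => t /negbTE ->.
- by rewrite (bigD1 s) //= eqxx scale1r big1 ?addr0 // => t /negbTE ->; rewrite scale0r.
Qed.

Lemma v_tau_CH (R : realType) n (hn : (2 <= n)%N) (J : {ffun 'I_(n.-1) -> {set 'I_n}}) :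
  in_Sigma J -> CH (v_tau R J).
Proof.
suff : forall N (J : {ffun 'I_(n.-1) -> {set 'I_n}}), (n * (n.-1 * n.-1) - meas J < N)%N -> in_Sigma J -> CH (v_tau R J).
  by move/(_ _ J (ltnSn _)).
elim => // N IH {}J hlt hs.
case: (boolP [exists j, exists j', exists k,
   [&& (acnt J j <= acnt J j')%N, j \in J k & j' \notin J k]]).
  case/existsP => j /existsP [j' /existsP [k /and3P [ajj' jk j'k]]].
  have ne : j != j' by apply/negP => /eqP e; move: j'k; rewrite -e jk.
  have [hs' e1 e2 e3] := Jmod_props hs jk j'k.
  set K := Jmod J j j' k in hs' e1 e2 e3.
  have AB : (acnt K j < acnt J j')%N by rewrite -ltnS -e1 ltnS.
  have hm := meas_lt ne AB e1 erefl erefl e2 e3.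
  have hCH : CH (v_tau R K).
    apply: IH hs'; have := meas_le K; lia.
  rewrite (@key_vec R n (v_tau R J) (v_tau R K) j j' (acnt K j) (acnt J j') ne AB); first last.
  - by move=> c cj cj'; rewrite !v_tauE !mxE e3.
  - by rewrite v_tauE mxE e2.
  - by rewrite v_tauE mxE.
  - by rewrite v_tauE mxE.
  - by rewrite v_tauE mxE e1.
  apply: CH_conv.
  - by case => //; move=> _; apply: CH_perm.
  - have : (acnt K j)%:R < (acnt J j')%:R :> R by rewrite ltr_nat.
    set a := (acnt K j)%:R; set b := (acnt J j')%:R => h.
    by case; apply: divr_ge0; lra.
  - rewrite big_bool /= -mulrDl.
    set a := (acnt K j)%:R; set b := (acnt J j')%:R.
    have : a < b :> R by rewrite ltr_nat.
    move=> h; rewrite divff //; apply/eqP; lra.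
move=> hno.
have ht : forall j j' k, (acnt J j <= acnt J j')%N -> j \in J k -> j' \in J k.
  move=> j j' k h jk; apply/negPn/negP => j'k; move/negP: hno; apply.
  by apply/existsP; exists j; apply/existsP; exists j'; apply/existsP; exists k;
    rewrite h jk j'k.
have [s ->] := chain_perm R hn hs ht.
exact: CH_pt.
Qed.

Definition gperm n (s : {perm 'I_n}) : {ffun 'I_(n.-1) -> {set 'I_n}} :=
  [ffun i : 'I_(n.-1) => [set j | (n.-1 - i <= s j)%N]].

Lemma gperm_Sigma n (s : {perm 'I_n}) : in_Sigma (gperm s).
Proof.
apply/forallP => i; rewrite ffunE.
rewrite (_ : [set j | _] = s @^-1: [set y : 'I_n | (n.-1 - i <= y)%N]); last first.
  by apply/setP => j; rewrite !inE.
rewrite card_preimset; last exact: perm_inj.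
rewrite card_ge_ord; apply/eqP; have := ltn_ord i; lia.
Qed.

Lemma gperm_v (R : realType) n (s : {perm 'I_n}) : v_tau R (gperm s) = perm_pt R s.
Proof.
apply/rowP => j; rewrite v_tauE !mxE; congr (_%:R).
rewrite /acnt (_ : [set i | _] = [set i : 'I_(n.-1) | (n.-1 - s j <= i)%N]).
  rewrite card_ge_ord; have := ltn_ord (s j); lia.
apply/setP => i; rewrite !inE ffunE inE; have := ltn_ord i; have := ltn_ord (s j).
move=> h1 h2; apply/idP/idP => h; lia.
Qed.

Theorem proposition9 (R : realType) (n : nat) (hn : (2 <= n)%N) (x : 'rV[R]_n) :
  in_conv_hull (@in_Sigma n) (@v_tau R n) x <->
  in_conv_hull (fun _ : {perm 'I_n} => true) (@perm_pt R n) x.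
Proof.
split.
  case=> w [w0 w1 ->]; apply: CH_conv => // J hJ; exact: v_tau_CH.
case=> w [w0 w1 ->].
exists (fun J => \sum_(s | gperm s == J) w s); split.
- by move=> J; apply: sumr_ge0.
- rewrite -w1 (partition_big (@gperm n) (@in_Sigma n)) //=.
  by move=> s _; apply: gperm_Sigma.
- rewrite (partition_big (@gperm n) (@in_Sigma n)) //=; last first.
    by move=> s _; apply: gperm_Sigma.
  apply: eq_bigr => J _; rewrite scaler_suml; apply: eq_bigr => s /eqP <-.
  by rewrite gperm_v.
Qed.
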